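(* Let $\{\Lambda_{t,t'}\}_{t\ge t'\ge0}$ be completely positive trace-preserving linear maps on operators of $\mathcal H_E$ satisfying $\Lambda_{t,t'}\Lambda_{t',t''}=\Lambda_{t,t''}$ for $t\ge t'\ge t''$ and $\Lambda_{t,t}=\mathrm{id}$. Define the modified quasi-probabilities $\tilde q^{(k)}$ below. Then: (i) $\tilde q^{(k)}$ satisfy the Chapman–Kolmogorov consistency criterion: for $k\ge2$, $1\le l\le k$, $\sum_{\xi_l,\eta_l\in\Omega_{\hat V}}\tilde q^{(k)}(\boldsymbol\xi\boldsymbol\eta\mathbf t)=\tilde q^{(k-1)}$ with the $l$-th triple $(\xi_l,\eta_l,t_l)$ removed, and $\sum_{\xi_1,\eta_1}\tilde q^{(1)}=1$. (ii) If moreover, for all $t\ge t'$, $\Lambda_{t,t'}(|n\rangle\langle n|)\in\mathrm{span}\{|m\rangle\langle m|\}_m$ for every $n$ and $\Lambda_{t,t'}(|n\rangle\langle n'|)\in\mathrm{span}\{|m\rangle\langle m'|: m\ne m'\}$ for every $n\ne n'$, then $\tilde q^{(k)}(\boldsymbol\xi\boldsymbol\eta\mathbf t)=\delta_{\boldsymbol\xi,\boldsymbol\eta}\tilde p^{(k)}(\boldsymbol\xi\mathbf t)$ for all $k$, where $$\tilde p^{(k)}(\boldsymbol\xi\mathbf t)=\Big(\prod_{l=1}^k\sum_{n_l:v_{n_l}=\xi_l}\Big)\langle n_k|\Lambda_{t_k,0}\hat\rho_E|n_k\rangle\prod_{l=1}^{k-1}\langle n_l|\Lambda_{t_l,t_{l+1}}(|n_{l+1}\rangle\langle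 n_{l+1}|)|n_l\rangle\ \ge0,$$ and $\{\tilde p^{(k)}\}_{k\ge1}$ is a consistent family of joint probability distributions (defining a stochastic process with values in $\Omega_{\hat V}$).
   Context: $\mathcal H_E$ finite-dimensional, $\hat V_E=\sum_n v_n|n\rangle\langle n|$ with a fixed orthonormal eigenbasis $\{|n\rangle\}$, $\Omega_{\hat V}$ its set of distinct eigenvalues, $\hat\rho_E$ a density matrix. Modified propagators: $T_{t,t'}(nm|n'm')=\mathrm{tr}_E\big(|m\rangle\langle n|\,\Lambda_{t,t'}(|n'\rangle\langle m'|)\big)$. For $k\ge1$, $t_1>\dots>t_k\ge0$: $$\tilde q^{(k)}(\boldsymbol\xi\boldsymbol\eta\mathbf t)=\Big(\prod_{l=1}^k\sum_{n_l:\,v_{n_l}=\xi_l}\ \sum_{m_l:\,v_{m_l}=\eta_l}\Big)\delta_{n_1,m_1}\langle n_k|\Lambda_{t_k,0}\hat\rho_E|m_k\rangle\prod_{l=1}^{k-1}T_{t_l,t_{l+1}}(n_lm_l|n_{l+1}m_{l+1}).$$ $\delta_{\boldsymbol\xi,\boldsymbol\eta}=\prod_l\delta_{\xi_l,\eta_l}$. *)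

(* Defs.v *)
From HB Require Import structures.
From mathcomp Require Import all_boot all_order all_algebra.
Set Implicit Arguments. Unset Strict Implicit. Unset Printing Implicit Defensive.
Import Order.TTheory GRing.Theory Num.Theory.
Local Open Scope ring_scope.

(* Scalars: C : numClosedFieldType (complex numbers, e.g. algC).
   Times: an arbitrary real field R (only the order on times matters).
   H_E = C^d, with the fixed orthonormal eigenbasis of V_E being the
   standard basis |n>, n : 'I_d.  |m><n| is delta_mx m n.              *)

Section Defs.
Variables (C : numClosedFieldType) (R : realFieldType) (d : nat).
Local Notation Mx := 'M[C]_d.

Definition psdf (I : finType) (X : I -> I -> C) : Prop :=
  forall x : I -> C, 0 <= \sum_(i : I) \sum_(j : I) (x i)^* * X i j * x j.

Definition density (rho : Mx) : Prop :=
  psdf (fun i j : 'I_d => rho i j) /\ \tr rho = 1.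

(* (id_m (x) L) acting on operators on C^m (x) H_E *)
Definition ampl (m : nat) (L : Mx -> Mx) (X : 'I_m * 'I_d -> 'I_m * 'I_d -> C) :=
  fun p q : 'I_m * 'I_d => L (\matrix_(a, b) X (p.1, a) (q.1, b)) p.2 q.2.

Definition completely_positive (L : Mx -> Mx) : Prop :=
  forall (m : nat) (X : 'I_m * 'I_d -> 'I_m * 'I_d -> C),
    psdf X -> psdf (ampl L X).

Definition linear_map (L : Mx -> Mx) : Prop :=
  forall (a : C) (A B : Mx), L (a *: A + B) = a *: L A + L B.

Definition trace_preserving (L : Mx -> Mx) : Prop :=
  forall A : Mx, \tr (L A) = \tr A.

Definition dyn_family (Lam : R -> R -> Mx -> Mx) : Prop :=
  (forall t t' : R, 0 <= t' -> t' <= t ->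
     [/\ linear_map (Lam t t'), completely_positive (Lam t t')
       & trace_preserving (Lam t t')]) /\
  (forall t t' t'' : R, 0 <= t'' -> t'' <= t' -> t' <= t ->
     forall A : Mx, Lam t t' (Lam t' t'' A) = Lam t t'' A) /\
  (forall t : R, 0 <= t -> forall A : Mx, Lam t t A = A).

Definition dephasing (Lam : R -> R -> Mx -> Mx) : Prop :=
  forall t t' : R, 0 <= t' -> t' <= t ->
    (forall n : 'I_d, is_diag_mx (Lam t t' (delta_mx n n))) /\
    (forall n n' : 'I_d, n != n' -> forall m : 'I_d, Lam t t' (delta_mx n n') m m = 0).

(* the set of distinct eigenvalues of V_E *)
Definition Omega (v : 'I_d -> C) : seq C := undup [seq v i | i <- enum 'I_d].

Definition Tprop (Lam : R -> R -> Mx -> Mx) (t t' : R) (n m n' m' : 'I_d) : C :=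
  \tr (delta_mx m n *m Lam t t' (delta_mx n' m')).

(* time arguments t_1 > ... > t_k >= 0, with k = k'.+1, index l-1 : 'I_k *)
Definition times_ok (k : nat) (t : 'I_k.+1 -> R) : Prop :=
  (forall i j : 'I_k.+1, (i < j)%N -> t j < t i) /\ 0 <= t ord_max.

Definition qtilde (Lam : R -> R -> Mx -> Mx) (v : 'I_d -> C) (rho : Mx) (k : nat)
    (xi eta : 'I_k.+1 -> C) (t : 'I_k.+1 -> R) : C :=
  \sum_(n : {ffun 'I_k.+1 -> 'I_d} | [forall l, v (n l) == xi l])
  \sum_(m : {ffun 'I_k.+1 -> 'I_d} | [forall l, v (m l) == eta l])
    ((n ord0 == m ord0)%:R * Lam (t ord_max) 0 rho (n ord_max) (m ord_max) *
     \prod_(l < k) Tprop Lam (t (widen_ord (leqnSn k) l)) (t (lift ord0 l))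
                      (n (widen_ord (leqnSn k) l)) (m (widen_ord (leqnSn k) l))
                      (n (lift ord0 l)) (m (lift ord0 l))).

Definition ptilde (Lam : R -> R -> Mx -> Mx) (v : 'I_d -> C) (rho : Mx) (k : nat)
    (xi : 'I_k.+1 -> C) (t : 'I_k.+1 -> R) : C :=
  \sum_(n : {ffun 'I_k.+1 -> 'I_d} | [forall l, v (n l) == xi l])
    (Lam (t ord_max) 0 rho (n ord_max) (n ord_max) *
     \prod_(l < k) Lam (t (widen_ord (leqnSn k) l)) (t (lift ord0 l))
                      (delta_mx (n (lift ord0 l)) (n (lift ord0 l)))
                      (n (widen_ord (leqnSn k) l)) (n (widen_ord (leqnSn k) l))).

End Defs.

Definition upd (T : Type) (k : nat) (f : 'I_k -> T) (l : 'I_k) (a : T) : 'I_k -> T :=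
  fun j => if j == l then a else f j.

(* Main.v *)
Require Import Defs.
From HB Require Import structures.
From mathcomp Require Import all_boot all_order all_algebra.
From mathcomp Require Import ring zify.
Import Order.TTheory GRing.Theory Num.Theory.
Local Open Scope ring_scope.
Set Implicit Arguments. Unset Strict Implicit. Unset Printing Implicit Defensive.

Lemma sum_pick (C : numClosedFieldType) (T : eqType) (r : seq T) (a : T) (F : T -> C) :
  uniq r -> a \in r -> \sum_(b <- r) (a == b)%:R * F b = F a.
Proof.
move=> ur ar; rewrite (big_rem a) //= eqxx mul1r big1_seq ?addr0 // => b /andP[_ hb].
rewrite (mem_rem_uniq a ur) inE in hb; case/andP: hb => hb _.
by rewrite eq_sym (negbTE hb) mul0r.
Qed.

Lemma lin_add (C : numClosedFieldType) d (L : 'M[C]_d -> 'M[C]_d) :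
  linear_map L -> forall A B, L (A + B) = L A + L B.
Proof. move=> hL A B; have := hL 1 A B; rewrite scale1r => ->; by rewrite scale1r. Qed.

Lemma lin0 (C : numClosedFieldType) d (L : 'M[C]_d -> 'M[C]_d) :
  linear_map L -> L 0 = 0.
Proof.
by move=> hL; apply/(addrI (L 0)); rewrite -lin_add // !addr0.
Qed.

Lemma linZ (C : numClosedFieldType) d (L : 'M[C]_d -> 'M[C]_d) :
  linear_map L -> forall c A, L (c *: A) = c *: L A.
Proof. by move=> hL c A; rewrite -[c *: A]addr0 hL lin0 // addr0. Qed.

Lemma lin_sum (C : numClosedFieldType) d (L : 'M[C]_d -> 'M[C]_d) (I : Type) (r : seq I) (P : pred I) F :
  linear_map L -> L (\sum_(i <- r | P i) F i) = \sum_(i <- r | P i) L (F i).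
Proof. by move=> hL; apply: (big_morph L (lin_add hL) (lin0 hL)). Qed.

Lemma lin_expand (C : numClosedFieldType) d (L : 'M[C]_d -> 'M[C]_d) (Z : 'M[C]_d) i j :
  linear_map L -> L Z i j = \sum_a \sum_b Z a b * L (delta_mx a b) i j.
Proof.
move=> hL; rewrite {1}(matrix_sum_delta Z) lin_sum // summxE.
apply: eq_bigr => a _; rewrite lin_sum // summxE; apply: eq_bigr => b _.
by rewrite linZ // mxE.
Qed.

Lemma tr_delta (C : numClosedFieldType) d (a b : 'I_d) :
  \tr (delta_mx a b : 'M[C]_d) = (a == b)%:R.
Proof.
rewrite /mxtrace (bigD1 a) //= big1 ?addr0 => [|i hi]; rewrite mxE.
  by rewrite eqxx /= eq_sym.
by rewrite (negbTE hi).
Qed.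

Lemma Tprop_E (C : numClosedFieldType) (R : realFieldType) d (Lam : R -> R -> 'M[C]_d -> 'M[C]_d) t t' a b a' b' :
  Tprop Lam t t' a b a' b' = Lam t t' (delta_mx a' b') a b.
Proof.
rewrite /Tprop /mxtrace (bigD1 b) //= big1 ?addr0 => [|i hi]; rewrite mxE.
  rewrite (bigD1 a) //= big1 ?addr0 => [|j hj]; rewrite mxE ?eqxx ?mul1r //.
  by rewrite (negbTE hj) andbF mul0r.
by rewrite big1 // => j _; rewrite mxE (negbTE hi) mul0r.
Qed.

Lemma psd_diag (C : numClosedFieldType) (I : finType) (X : I -> I -> C) i :
  psdf X -> 0 <= X i i.
Proof.
move=> /(_ (fun j => (j == i)%:R)).
rewrite (bigD1 i) //= [X in _ + X]big1 => [|j hj].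
  rewrite (bigD1 i) //= big1 => [|k hk]; first by rewrite eqxx conjC1 mul1r mulr1 !addr0.
  by rewrite (negbTE hk) mulr0.
by rewrite big1 // => k _; rewrite (negbTE hj) conjC0 !mul0r.
Qed.

Lemma sum_pair1 (C : numClosedFieldType) (J : finType) (G : 'I_1 * J -> C) :
  \sum_p G p = \sum_j G (ord0, j).
Proof.
rewrite (eq_bigr (fun p => G (p.1, p.2))); last by case.
by rewrite -(pair_bigA _ (fun i j => G (i, j))) big_ord1.
Qed.

Lemma psd_lift1 (C : numClosedFieldType) d (M : 'M[C]_d) :
  psdf (fun i j : 'I_d => M i j) -> psdf (fun p q : 'I_1 * 'I_d => M p.2 q.2).
Proof.
move=> hM x; have := hM (fun a => x (ord0, a)).
rewrite sum_pair1 /=.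
congr (_ <= _); apply: eq_bigr => a _.
by rewrite sum_pair1.
Qed.

Lemma cp_diag (C : numClosedFieldType) d (L : 'M[C]_d -> 'M[C]_d) (M : 'M[C]_d) n :
  completely_positive L -> psdf (fun i j : 'I_d => M i j) -> 0 <= L M n n.
Proof.
move=> hL hM; have := psd_diag (ord0, n) (hL 1%N _ (psd_lift1 hM)).
rewrite /ampl /=; congr (_ <= L _ _ _); apply/matrixP => a b; by rewrite mxE.
Qed.

Lemma psd_delta (C : numClosedFieldType) d (n : 'I_d) :
  psdf (fun i j : 'I_d => (delta_mx n n : 'M[C]_d) i j).
Proof.
move=> x; rewrite (bigD1 n) //= [X in _ + X]big1 => [|j hj].
  rewrite (bigD1 n) //= big1 => [|k hk]; last by rewrite mxE (negbTE hk) andbF mulr0 mul0r.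
  rewrite mxE eqxx mulr1 !addr0 mulrC -normCK; exact: exprn_ge0.
by rewrite big1 // => k _; rewrite mxE (negbTE hj) mulr0 mul0r.
Qed.

Fixpoint Yc {C : numClosedFieldType} {R : realFieldType} {d : nat}
  (Lam : R -> R -> 'M[C]_d -> 'M[C]_d) (rho : 'M[C]_d)
  (s : seq (R * 'M[C]_d * 'M[C]_d)) (tp : R) : 'M[C]_d :=
  match s with
  | [::] => Lam tp 0 rho
  | x :: s' => Lam tp x.1.1 (x.1.2 *m Yc Lam rho s' x.1.1 *m x.2)
  end.

Fixpoint okt {R : realFieldType} (ts : seq R) (tp : R) : Prop :=
  match ts with
  | [::] => 0 <= tp
  | t :: ts' => t <= tp /\ okt ts' t
  end.

Definition times {C : numClosedFieldType} {R : realFieldType} {d : nat}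
  (s : seq (R * 'M[C]_d * 'M[C]_d)) : seq R := [seq x.1.1 | x <- s].

Lemma okt_ge0 (R : realFieldType) (ts : seq R) tp : okt ts tp -> 0 <= tp.
Proof.
elim: ts tp => [//|t ts IH] tp /= [h1 h2]; exact: le_trans (IH _ h2) h1.
Qed.

Lemma dyn_lin (C : numClosedFieldType) (R : realFieldType) d (Lam : R -> R -> 'M[C]_d -> 'M[C]_d) t t' :
  dyn_family Lam -> 0 <= t' -> t' <= t -> linear_map (Lam t t').
Proof. by move=> [h _] h1 h2; case: (h _ _ h1 h2). Qed.
Lemma dyn_cp (C : numClosedFieldType) (R : realFieldType) d (Lam : R -> R -> 'M[C]_d -> 'M[C]_d) t t' :
  dyn_family Lam -> 0 <= t' -> t' <= t -> completely_positive (Lam t t').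
Proof. by move=> [h _] h1 h2; case: (h _ _ h1 h2). Qed.
Lemma dyn_tp (C : numClosedFieldType) (R : realFieldType) d (Lam : R -> R -> 'M[C]_d -> 'M[C]_d) t t' :
  dyn_family Lam -> 0 <= t' -> t' <= t -> trace_preserving (Lam t t').
Proof. by move=> [h _] h1 h2; case: (h _ _ h1 h2). Qed.
Lemma dyn_comp (C : numClosedFieldType) (R : realFieldType) d (Lam : R -> R -> 'M[C]_d -> 'M[C]_d) t t' t'' A :
  dyn_family Lam -> 0 <= t'' -> t'' <= t' -> t' <= t -> Lam t t' (Lam t' t'' A) = Lam t t'' A.
Proof. by move=> [_ [h _]] h1 h2 h3; apply: h. Qed.
Lemma dyn_id (C : numClosedFieldType) (R : realFieldType) d (Lam : R -> R -> 'M[C]_d -> 'M[C]_d) t A :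
  dyn_family Lam -> 0 <= t -> Lam t t A = A.
Proof. by move=> [_ [_ h]] h1; apply: h. Qed.

Lemma Y_collapse (C : numClosedFieldType) (R : realFieldType) d (Lam : R -> R -> 'M[C]_d -> 'M[C]_d) rho s t tp :
  dyn_family Lam -> okt (times s) t -> t <= tp -> Lam tp t (Yc Lam rho s t) = Yc Lam rho s tp.
Proof.
move=> hD; case: s => [|x s] /=.
  by move=> h0 htp; rewrite (dyn_comp _ hD) // lexx.
move=> [hx ho] htp; rewrite (dyn_comp _ hD) //; exact: okt_ge0 ho.
Qed.

Lemma Y_remove (C : numClosedFieldType) (R : realFieldType) d (Lam : R -> R -> 'M[C]_d -> 'M[C]_d) rho s1 s2 t tp :
  dyn_family Lam -> okt (times s1 ++ t :: times s2) tp ->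
  Yc Lam rho (s1 ++ (t, 1%:M, 1%:M) :: s2) tp = Yc Lam rho (s1 ++ s2) tp.
Proof.
move=> hD; elim: s1 tp => [|x s1 IH] tp /=.
  by move=> [ht ho]; rewrite mul1mx mulmx1 Y_collapse.
by move=> [hx ho]; rewrite IH.
Qed.

Lemma Y_sum (C : numClosedFieldType) (R : realFieldType) d (Lam : R -> R -> 'M[C]_d -> 'M[C]_d) rho s1 s2 t tp
   (A B : Type) (ra : seq A) (rb : seq B) (Pf : A -> 'M[C]_d) (Qf : B -> 'M[C]_d) :
  dyn_family Lam -> okt (times s1 ++ t :: times s2) tp ->
  \sum_(a <- ra) \sum_(b <- rb) Yc Lam rho (s1 ++ (t, Pf a, Qf b) :: s2) tp =
  Yc Lam rho (s1 ++ (t, \sum_(a <- ra) Pf a, \sum_(b <- rb) Qf b) :: s2) tp.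
Proof.
move=> hD; elim: s1 tp => [|x s1 IH] tp /=.
  move=> [ht ho]; have h0 := okt_ge0 ho.
  rewrite mulmx_suml mulmx_suml lin_sum; last exact: dyn_lin.
  apply: eq_bigr => a _; rewrite mulmx_sumr lin_sum //; exact: dyn_lin.
move=> [hx ho]; have h0 := okt_ge0 ho.
have hL : linear_map (Lam tp x.1.1) by exact: dyn_lin.
rewrite -IH // mulmx_sumr mulmx_suml lin_sum //; apply: eq_bigr => a _.
by rewrite mulmx_sumr mulmx_suml lin_sum.
Qed.

Lemma tr_Ycons (C : numClosedFieldType) (R : realFieldType) d (Lam : R -> R -> 'M[C]_d -> 'M[C]_d) rho x s tp :
  dyn_family Lam -> 0 <= x.1.1 -> x.1.1 <= tp ->
  \tr (Yc Lam rho (x :: s) tp) = \tr (x.1.2 *m Yc Lam rho s x.1.1 *m x.2).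
Proof. by move=> hD h0 h1 /=; rewrite (dyn_tp hD). Qed.

Lemma tr_sum (C : numClosedFieldType) d (I : Type) (r : seq I) (F : I -> 'M[C]_d) :
  \tr (\sum_(i <- r) F i) = \sum_(i <- r) \tr (F i).
Proof. by apply: (big_morph _ (@mxtraceD _ _) (mxtrace0 _ _)). Qed.

Definition Pm {C : numClosedFieldType} {d : nat} (v : 'I_d -> C) (x : C) : 'M[C]_d :=
  \matrix_(i, j) ((i == j) && (v i == x))%:R.

Lemma Pm_mull (C : numClosedFieldType) d (v : 'I_d -> C) x (Y : 'M[C]_d) a b :
  (Pm v x *m Y) a b = (v a == x)%:R * Y a b.
Proof.
rewrite mxE (bigD1 a) //= big1 ?addr0 => [|c hc]; rewrite mxE ?eqxx //.
by rewrite eq_sym (negbTE hc) mul0r.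
Qed.

Lemma Pm_mulr (C : numClosedFieldType) d (v : 'I_d -> C) x (Y : 'M[C]_d) a b :
  (Y *m Pm v x) a b = Y a b * (v b == x)%:R.
Proof.
rewrite mxE (bigD1 b) //= big1 ?addr0 => [|c hc]; rewrite mxE ?eqxx //.
by rewrite (negbTE hc) mulr0.
Qed.

Lemma Y_top (C : numClosedFieldType) (R : realFieldType) d (Lam : R -> R -> 'M[C]_d -> 'M[C]_d)
   (v : 'I_d -> C) x y (Y : 'M[C]_d) t0 tp i j :
  dyn_family Lam -> 0 <= t0 -> t0 <= tp ->
  Lam tp t0 (Pm v x *m Y *m Pm v y) i j =
  \sum_(a | v a == x) \sum_(b | v b == y) (Y a b * Lam tp t0 (delta_mx a b) i j).
Proof.
move=> hD h0 h1; rewrite lin_expand; last exact: dyn_lin.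
rewrite [RHS]big_mkcond; apply: eq_bigr => a _.
case: (boolP (v a == x)) => ha; last first.
  by rewrite big1 // => b _; rewrite Pm_mulr Pm_mull (negbTE ha) /= !mul0r.
rewrite [RHS]big_mkcond; apply: eq_bigr => b _.
rewrite Pm_mulr Pm_mull ha mul1r; case: (boolP (v b == y)) => hb;
  by rewrite ?(negbTE hb) ?hb ?mulr1 ?mulr0 ?mul0r.
Qed.

Lemma Omega_mem (C : numClosedFieldType) d (v : 'I_d -> C) n : v n \in Omega v.
Proof. by rewrite mem_undup; apply: map_f; rewrite mem_enum. Qed.

Lemma sum_Pm (C : numClosedFieldType) d (v : 'I_d -> C) :
  \sum_(a <- Omega v) Pm v a = 1%:M.
Proof.
apply/matrixP => i j; rewrite summxE mxE.
under eq_bigr => a _ do rewrite mxE.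
case: eqP => [->|hij] /=; last by rewrite big1.
apply: (etrans _ (sum_pick (fun _ => 1 : C) (undup_uniq _) (Omega_mem v j))).
by apply: eq_bigr => a _; rewrite mulr1.
Qed.

Definition sq {C : numClosedFieldType} {R : realFieldType} {d : nat} (v : 'I_d -> C) k
  (xi eta : 'I_k -> C) (t : 'I_k -> R) : seq (R * 'M[C]_d * 'M[C]_d) :=
  [seq (t j, Pm v (xi j), Pm v (eta j)) | j <- enum 'I_k].

Definition W {C : numClosedFieldType} {R : realFieldType} {d : nat}
  (Lam : R -> R -> 'M[C]_d -> 'M[C]_d) (rho : 'M[C]_d) k (n m : {ffun 'I_k.+1 -> 'I_d})
  (t : 'I_k.+1 -> R) : C :=
  Lam (t ord_max) 0 rho (n ord_max) (m ord_max) *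
     \prod_(l < k) Tprop Lam (t (widen_ord (leqnSn k) l)) (t (lift ord0 l))
                      (n (widen_ord (leqnSn k) l)) (m (widen_ord (leqnSn k) l))
                      (n (lift ord0 l)) (m (lift ord0 l)).

Definition good {R : realFieldType} k (t : 'I_k -> R) : Prop :=
  forall i j : 'I_k, (i <= j)%N -> 0 <= t j /\ t j <= t i.

Lemma good_lift (R : realFieldType) k (t : 'I_k.+1 -> R) (l : 'I_k.+1) :
  good t -> good (fun j : 'I_k => t (lift l j)).
Proof.
rewrite /good => hg i j hij; apply: (hg (lift l i) (lift l j)); rewrite /= /bump.
by case: (leqP l i) => h1; case: (leqP l j) => h2 /=; lia.
Qed.

Definition fcons {J : finType} {k : nat} (a : J) (g : {ffun 'I_k -> J}) : {ffun 'I_k.+1 -> J} :=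
  [ffun i => if unlift ord0 i is Some j then g j else a].

Lemma fcons0 (J : finType) k (a : J) (g : {ffun 'I_k -> J}) : fcons a g ord0 = a.
Proof. by rewrite ffunE unlift_none. Qed.

Lemma fconsS (J : finType) k (a : J) (g : {ffun 'I_k -> J}) j : fcons a g (lift ord0 j) = g j.
Proof. by rewrite ffunE liftK. Qed.

Lemma sum_cons (C : numClosedFieldType) (J : finType) k (P : 'I_k.+1 -> pred J)
   (F : {ffun 'I_k.+1 -> J} -> C) :
  \sum_(n : {ffun 'I_k.+1 -> J} | [forall l, P l (n l)]) F n =
  \sum_(a | P ord0 a) \sum_(g : {ffun 'I_k -> J} | [forall l, P (lift ord0 l) (g l)]) F (fcons a g).
Proof.
rewrite pair_big_dep /=.
rewrite (reindex (fun p : J * {ffun 'I_k -> J} => fcons p.1 p.2)) /=.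
  apply: eq_bigl => -[a g] /=; apply/forallP/andP => [h|[h1 /forallP h2]].
    split; first by have := h ord0; rewrite fcons0.
    by apply/forallP => l; have := h (lift ord0 l); rewrite fconsS.
  by move=> l; case: (unliftP ord0 l) => [j ->|->]; rewrite ?fconsS ?fcons0.
exists (fun n : {ffun 'I_k.+1 -> J} => (n ord0, [ffun j => n (lift ord0 j)])).
  move=> [a g] _ /=; rewrite fcons0; congr pair; apply/ffunP => j; by rewrite ffunE fconsS.
move=> n _ /=; apply/ffunP => l; case: (unliftP ord0 l) => [j ->|->];
  by rewrite ?fconsS ?fcons0 ?ffunE.
Qed.

Lemma sum_ffun0 (C : numClosedFieldType) (J : finType) (P : 'I_0 -> pred J)
   (G : {ffun 'I_0 -> J} -> C) g0 :
  \sum_(g : {ffun 'I_0 -> J} | [forall l, P l (g l)]) G g = G g0.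
Proof.
apply: big_pred1 => g /=.
rewrite (_ : g = g0) ?eqxx; last by apply/ffunP => -[].
by apply/forallP => -[].
Qed.

Lemma enum_I0 : enum 'I_0 = [::].
Proof. by apply/size0nil; rewrite size_enum_ord. Qed.

Lemma entry (C : numClosedFieldType) (R : realFieldType) d (Lam : R -> R -> 'M[C]_d -> 'M[C]_d)
   (rho : 'M[C]_d) (v : 'I_d -> C) (hD : dyn_family Lam) k :
  forall (xi eta : 'I_k.+1 -> C) (t : 'I_k.+1 -> R) tp i j,
  good t -> t ord0 <= tp ->
  Yc Lam rho (sq v xi eta t) tp i j =
  \sum_(n : {ffun 'I_k.+1 -> 'I_d} | [forall l, v (n l) == xi l])
  \sum_(m : {ffun 'I_k.+1 -> 'I_d} | [forall l, v (m l) == eta l])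
    (Lam tp (t ord0) (delta_mx (n ord0) (m ord0)) i j * W Lam rho n m t).
Proof.
elim: k => [|k IH] xi eta t tp i j hg htp.
  have e : sq v xi eta t = [:: (t ord0, Pm v (xi ord0), Pm v (eta ord0))].
    by rewrite /sq enum_ordSl enum_I0.
  have h0 : 0 <= t ord0 by case: (hg ord0 ord0).
  rewrite e /= Y_top //.
  rewrite (sum_cons (fun l a => v a == xi l)); apply: eq_bigr => a ha.
  rewrite (@sum_ffun0 _ _ (fun l a => v a == xi (lift ord0 l)) _ (ffun0 (card_ord 0))).
  rewrite (sum_cons (fun l a => v a == eta l)); apply: eq_bigr => b hb.
  rewrite (@sum_ffun0 _ _ (fun l a => v a == eta (lift ord0 l)) _ (ffun0 (card_ord 0))).
  rewrite /W big_ord0 mulr1 !fcons0.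
  have -> : (ord_max : 'I_1) = ord0 by apply: val_inj.
  by rewrite !fcons0 mulrC.
have e : sq v xi eta t = (t ord0, Pm v (xi ord0), Pm v (eta ord0)) ::
    sq v (fun l => xi (lift ord0 l)) (fun l => eta (lift ord0 l)) (fun l => t (lift ord0 l)).
  by rewrite /sq enum_ordSl /= -map_comp.
have h0 : 0 <= t ord0 by case: (hg ord0 ord0).
have h1 : t (lift ord0 ord0) <= t ord0 by case: (hg ord0 (lift ord0 ord0)).
rewrite e /= Y_top //.
rewrite (sum_cons (fun l a => v a == xi l)); apply: eq_bigr => a ha.
rewrite (eq_bigr _ (fun g _ => sum_cons (fun l a => v a == eta l) _)).
rewrite exchange_big /=; apply: eq_bigr => b hb.
rewrite IH //; last exact: good_lift.
rewrite mulr_suml; apply: eq_bigr => g hg'.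
rewrite mulr_suml; apply: eq_bigr => h hh.
rewrite /W big_ord_recl !fcons0.
have hw : forall l : 'I_k, widen_ord (leqnSn k.+1) (lift ord0 l) = lift ord0 (widen_ord (leqnSn k) l).
  by move=> l; apply: val_inj.
have hw0 : widen_ord (leqnSn k.+1) ord0 = ord0 by apply: val_inj.
have hm : (ord_max : 'I_k.+2) = lift ord0 (ord_max : 'I_k.+1) by apply: val_inj.
rewrite hw0 hm !fconsS !fcons0 Tprop_E.
rewrite [LHS]mulrC; congr (_ * _); rewrite mulrCA; congr (_ * (_ * _)).
apply: eq_bigr => l _; rewrite hw !fconsS //.
Qed.

Lemma R1 (C : numClosedFieldType) (R : realFieldType) d (Lam : R -> R -> 'M[C]_d -> 'M[C]_d)
   (rho : 'M[C]_d) (v : 'I_d -> C) (hD : dyn_family Lam) k (xi eta : 'I_k.+1 -> C) (t : 'I_k.+1 -> R) :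
  good t -> \tr (Yc Lam rho (sq v xi eta t) (t ord0)) = qtilde Lam v rho xi eta t.
Proof.
move=> hg; have h0 : 0 <= t ord0 by case: (hg ord0 ord0).
rewrite /mxtrace (eq_bigr _ (fun i _ => entry rho v hD xi eta i i hg (lexx _))).
rewrite exchange_big; apply: eq_bigr => n hn; rewrite exchange_big; apply: eq_bigr => m hm.
rewrite -mulr_suml.
under eq_bigr => i _ do rewrite (dyn_id _ hD h0).
rewrite (_ : \sum_i _ = \tr (delta_mx (n ord0) (m ord0))) // tr_delta /W mulrA //.
Qed.

Lemma okt_enum (R : realFieldType) k : forall (t : 'I_k.+1 -> R) tp,
  good t -> t ord0 <= tp -> okt [seq t j | j <- enum 'I_k.+1] tp.
Proof.
elim: k => [|k IH] t tp hg htp.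
  rewrite enum_ordSl enum_I0 /=; split => //; by case: (hg ord0 ord0).
rewrite enum_ordSl /= -map_comp; split => //.
apply: (IH (fun j => t (lift ord0 j))); first exact: good_lift.
by case: (hg ord0 (lift ord0 ord0)).
Qed.

Lemma nth_enum_map (T : Type) (x0 : T) n (g : 'I_n.+1 -> T) i :
  (i < n.+1)%N -> nth x0 [seq g j | j <- enum 'I_n.+1] i = g (inord i).
Proof.
move=> hi; rewrite (nth_map ord0) ?size_enum_ord //; congr g; apply: val_inj.
by rewrite /= nth_enum_ord // inordK.
Qed.

Lemma split_upd (T : Type) (x0 : T) k (l : 'I_k.+2) (g g' : 'I_k.+2 -> T) :
  (forall j, j != l -> g' j = g j) ->
  [seq g' j | j <- enum 'I_k.+2] =
  take l [seq g j | j <- enum 'I_k.+2] ++ g' l :: drop l.+1 [seq g j | j <- enum 'I_k.+2].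
Proof.
move=> hg; have hl := ltn_ord l.
apply: (eq_from_nth (x0 := x0)).
  have hs : forall (s : seq T) x, (l < size s)%N -> size (take l s ++ x :: drop l.+1 s) = size s.
    by move=> s x hls; rewrite size_cat /= size_take size_drop hls; lia.
  rewrite hs ?size_map // -enumT size_enum_ord //.
move=> i; rewrite size_map size_enum_ord => hi.
rewrite nth_enum_map // nth_cat size_take size_map size_enum_ord hl.
case: (ltngtP i l) => hil.
- rewrite nth_take // nth_enum_map // hg //; apply/eqP => e.
  by have := congr1 val e; rewrite /= inordK //; lia.
- rewrite (_ : (i - l = (i - l.+1).+1)%N) /=; last by lia.
  rewrite nth_drop nth_enum_map; last by lia.
  rewrite hg; last by apply/eqP => e; have := congr1 val e; rewrite /= inordK //; lia.
  by congr g; apply: val_inj; rewrite /= !inordK; lia.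
- rewrite hil subnn /=; congr g'; apply: val_inj; by rewrite /= inordK // -hil.
Qed.

Lemma split_lift (T : Type) (x0 : T) k (l : 'I_k.+2) (g : 'I_k.+2 -> T) :
  [seq g (lift l j) | j <- enum 'I_k.+1] =
  take l [seq g j | j <- enum 'I_k.+2] ++ drop l.+1 [seq g j | j <- enum 'I_k.+2].
Proof.
have hl := ltn_ord l.
apply: (eq_from_nth (x0 := x0)).
  have hs : forall (s : seq T), (l < size s)%N -> size (take l s ++ drop l.+1 s) = (size s).-1.
    by move=> s hls; rewrite size_cat size_take size_drop hls; lia.
  by rewrite hs ?size_map -?enumT ?size_enum_ord.
move=> i; rewrite size_map size_enum_ord => hi.
rewrite (nth_enum_map x0 (fun j => g (lift l j))) // nth_cat size_take size_map size_enum_ord hl.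
case: (ltnP i l) => hil.
- rewrite nth_take // nth_enum_map; last by lia.
  congr g; apply: val_inj; rewrite /= /bump !inordK; try lia.
  all: try by case: (leqP l i) => h; lia.
- rewrite nth_drop nth_enum_map; last by lia.
  congr g; apply: val_inj; rewrite /= /bump !inordK; try lia.
  all: try by case: (leqP l i) => h; lia.
Qed.

Lemma good_of_ok (R : realFieldType) k (t : 'I_k.+1 -> R) : times_ok t -> good t.
Proof.
move=> [hlt h0].
have hmax : forall j, 0 <= t j.
  move=> j; case: (ltngtP j (@ord_max k)) => hj.
  - exact: le_trans h0 (ltW (hlt _ _ hj)).
  - by have := ltn_ord j; rewrite /= in hj; lia.
  - by rewrite (_ : j = ord_max) //; apply: val_inj.
move=> i j hij; split; first exact: hmax.
case: (ltngtP i j) => h.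
- exact: ltW (hlt _ _ h).
- lia.
- by rewrite (_ : i = j) //; apply: val_inj.
Qed.

Lemma ok_lift (R : realFieldType) k (t : 'I_k.+2 -> R) (l : 'I_k.+2) :
  times_ok t -> times_ok (fun j : 'I_k.+1 => t (lift l j)).
Proof.
move=> ht; have hg := good_of_ok ht; case: ht => hlt h0; split.
  move=> i j hij; apply: hlt; rewrite /= /bump.
  by case: (leqP l i) => h1; case: (leqP l j) => h2 /=; lia.
by case: (hg (lift l ord_max) (lift l ord_max)).
Qed.

Lemma partI1 (C : numClosedFieldType) (R : realFieldType) d (Lam : R -> R -> 'M[C]_d -> 'M[C]_d)
   (v : 'I_d -> C) (rho : 'M[C]_d) :
  dyn_family Lam -> density rho ->
  forall t : 'I_1 -> R, times_ok t ->
      \sum_(a <- Omega v) \sum_(b <- Omega v)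
         qtilde Lam v rho (fun _ => a) (fun _ => b) t = 1.
Proof.
move=> hD [_ htr] t ht; have hg := good_of_ok ht.
have h0 : 0 <= t ord0 by case: (hg ord0 ord0).
transitivity (\tr (\sum_(a <- Omega v) \sum_(b <- Omega v)
   Yc Lam rho ([::] ++ (t ord0, Pm v a, Pm v b) :: [::]) (t ord0))).
  rewrite tr_sum; apply: eq_bigr => a _; rewrite tr_sum; apply: eq_bigr => b _.
  rewrite -R1 //; congr (\tr (Yc _ _ _ _)); by rewrite /sq enum_ordSl enum_I0.
rewrite (@Y_sum _ _ _ Lam rho [::] [::] (t ord0) (t ord0) _ _ (Omega v) (Omega v) (Pm v) (Pm v) hD) //.
rewrite !sum_Pm /= mul1mx mulmx1 (dyn_tp hD) ?(dyn_tp hD) //.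
Qed.

Lemma partI2 (C : numClosedFieldType) (R : realFieldType) d (Lam : R -> R -> 'M[C]_d -> 'M[C]_d)
   (v : 'I_d -> C) (rho : 'M[C]_d) :
  dyn_family Lam ->
   (forall (k : nat) (xi eta : 'I_k.+2 -> C) (t : 'I_k.+2 -> R) (l : 'I_k.+2),
      times_ok t ->
      \sum_(a <- Omega v) \sum_(b <- Omega v)
         qtilde Lam v rho (upd xi l a) (upd eta l b) t
      = qtilde Lam v rho (fun j => xi (lift l j)) (fun j => eta (lift l j))
                         (fun j => t (lift l j))).
Proof.
move=> hD k xi eta t l ht; have hg := good_of_ok ht.
have h0 : 0 <= t ord0 by case: (hg ord0 ord0).
pose g := fun j => (t j, Pm v (xi j), Pm v (eta j)).
pose s1 := take l [seq g j | j <- enum 'I_k.+2].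
pose s2 := drop l.+1 [seq g j | j <- enum 'I_k.+2].
have e1 : forall a b, sq v (upd xi l a) (upd eta l b) t = s1 ++ (t l, Pm v a, Pm v b) :: s2.
  move=> a b; rewrite /sq (@split_upd _ (0, 0, 0) k l g
     (fun j => (t j, Pm v (upd xi l a j), Pm v (upd eta l b j)))) /upd ?eqxx //.
  by move=> j hj; rewrite /g (negbTE hj).
have e2 : sq v (fun j => xi (lift l j)) (fun j => eta (lift l j)) (fun j => t (lift l j)) = s1 ++ s2.
  by rewrite /sq (split_lift (0, 0, 0) l g).
have hok : okt (times s1 ++ t l :: times s2) (t ord0).
  have -> : times s1 ++ t l :: times s2 = [seq t j | j <- enum 'I_k.+2].
    rewrite /times -[t l]/((fun x : R * 'M[C]_d * 'M[C]_d => x.1.1) (g l)) -map_cons -map_cat.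
    rewrite -(@split_upd _ (0, 0, 0) k l g g) //.
    by rewrite -map_comp.
  exact: okt_enum.
transitivity (\tr (\sum_(a <- Omega v) \sum_(b <- Omega v)
   Yc Lam rho (s1 ++ (t l, Pm v a, Pm v b) :: s2) (t ord0))).
  rewrite tr_sum; apply: eq_bigr => a _; rewrite tr_sum; apply: eq_bigr => b _.
  by rewrite -R1 // e1.
rewrite (@Y_sum _ _ _ Lam rho s1 s2 (t l) (t ord0) _ _ (Omega v) (Omega v) (Pm v) (Pm v) hD) //.
rewrite !sum_Pm Y_remove // -R1 //; last exact: good_lift.
have hg' := good_lift l hg.
have h1 : 0 <= t (lift l ord0) /\ t (lift l ord0) <= t ord0.
  split; first by case: (hg' ord0 ord0).
  by case: (hg ord0 (lift l ord0)).
rewrite -e2 /sq enum_ordSl map_cons !tr_Ycons //=; by case: h1.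
Qed.

Definition Fq {C : numClosedFieldType} {R : realFieldType} {d : nat}
  (Lam : R -> R -> 'M[C]_d -> 'M[C]_d) (rho : 'M[C]_d) k (n m : {ffun 'I_k.+1 -> 'I_d})
  (t : 'I_k.+1 -> R) : C :=
    ((n ord0 == m ord0)%:R * Lam (t ord_max) 0 rho (n ord_max) (m ord_max) *
     \prod_(l < k) Tprop Lam (t (widen_ord (leqnSn k) l)) (t (lift ord0 l))
                      (n (widen_ord (leqnSn k) l)) (m (widen_ord (leqnSn k) l))
                      (n (lift ord0 l)) (m (lift ord0 l))).

Lemma Fzero (C : numClosedFieldType) (R : realFieldType) d (Lam : R -> R -> 'M[C]_d -> 'M[C]_d)
   (rho : 'M[C]_d) k (n m : {ffun 'I_k.+1 -> 'I_d}) (t : 'I_k.+1 -> R) :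
  dephasing Lam -> times_ok t -> n != m -> Fq Lam rho n m t = 0.
Proof.
move=> hdep ht hnm; have hg := good_of_ok ht; rewrite /Fq.
case: (boolP (n ord0 == m ord0)) => h0 /=; last by rewrite mulr0n !mul0r.
have ex : exists i, (i < k.+1)%N && (n (inord i) != m (inord i)).
  case: (pickP (fun j : 'I_k.+1 => n j != m j)) => [j hj | hn].
    by exists j; rewrite ltn_ord inord_val hj.
  have e : n = m by apply/ffunP => j; apply/eqP; move: (hn j) => /= /negbFE.
  by rewrite e eqxx in hnm.
case: (ex_minnP ex) => j0 /andP[hj0 hne] hmin.
case: j0 hj0 hne hmin => [|l] hj0 hne hmin.
  have e0 : (inord 0 : 'I_k.+1) = ord0 by apply: val_inj; rewrite /= inordK.
  by rewrite e0 h0 in hne.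
have hl : (l < k)%N by lia.
pose lo := Ordinal hl.
have ew : n (widen_ord (leqnSn k) lo) = m (widen_ord (leqnSn k) lo).
  apply/eqP; apply/negPn/negP => hne'.
  have ewl : (inord l : 'I_k.+1) = widen_ord (leqnSn k) lo by apply: val_inj; rewrite /= inordK //; lia.
  have := hmin l; rewrite ewl hne' andbT.
  have -> : (l < k.+1)%N by lia.
  by move=> /(_ isT); lia.
have el : lift ord0 lo = inord l.+1 :> 'I_k.+1.
  by apply: val_inj; rewrite /= inordK.
have [ha hb] := hg (widen_ord (leqnSn k) lo) (lift ord0 lo) (leqnSn _).
rewrite (bigD1 lo) //= Tprop_E ew.
have := (hdep _ _ ha hb).2 (n (lift ord0 lo)) (m (lift ord0 lo)) _ (m (widen_ord (leqnSn k) lo)).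
rewrite el => -> //; by rewrite mul0r mulr0.
Qed.

Lemma qdiag (C : numClosedFieldType) (R : realFieldType) d (Lam : R -> R -> 'M[C]_d -> 'M[C]_d)
   (v : 'I_d -> C) (rho : 'M[C]_d) k (xi eta : 'I_k.+1 -> C) (t : 'I_k.+1 -> R) :
  dephasing Lam -> times_ok t ->
  qtilde Lam v rho xi eta t = ([forall l, xi l == eta l])%:R * ptilde Lam v rho xi t.
Proof.
move=> hdep ht.
have -> : qtilde Lam v rho xi eta t =
   \sum_(n : {ffun 'I_k.+1 -> 'I_d} | [forall l, v (n l) == xi l])
   \sum_(m : {ffun 'I_k.+1 -> 'I_d} | [forall l, v (m l) == eta l]) Fq Lam rho n m t by [].
transitivity (\sum_(n : {ffun 'I_k.+1 -> 'I_d} | [forall l, v (n l) == xi l])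
   ([forall l, v (n l) == eta l])%:R * Fq Lam rho n n t).
  apply: eq_bigr => n hn; case: (boolP [forall l, v (n l) == eta l]) => he.
    rewrite (bigD1 n) //= big1 => [|m /andP[_ hmn]]; last by apply: Fzero; rewrite // eq_sym.
    by rewrite addr0 ?mulr1n mul1r.
  rewrite mul0r big1 // => m hm; apply: Fzero => //; apply/eqP => e.
  by rewrite e hm in he.
rewrite /ptilde; case: (boolP [forall l, xi l == eta l]) => hxe.
  rewrite mul1r; apply: eq_bigr => n hn.
  have -> : [forall l, v (n l) == eta l].
    apply/forallP => l; move/forallP: hn => /(_ l)/eqP ->; exact: (forallP hxe l).
  rewrite mul1r /Fq eqxx mul1r; congr (_ * _); apply: eq_bigr => l _; by rewrite Tprop_E.
rewrite mul0r big1 // => n hn.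
have -> : [forall l, v (n l) == eta l] = false.
  apply/negP => /forallP h; move/negP: hxe; apply; apply/forallP => l.
  by move/forallP: hn => /(_ l) /eqP <-; exact: h l.
by rewrite mul0r.
Qed.

Lemma ptilde_ge0 (C : numClosedFieldType) (R : realFieldType) d (Lam : R -> R -> 'M[C]_d -> 'M[C]_d)
   (v : 'I_d -> C) (rho : 'M[C]_d) k (xi : 'I_k.+1 -> C) (t : 'I_k.+1 -> R) :
  dyn_family Lam -> density rho -> times_ok t -> 0 <= ptilde Lam v rho xi t.
Proof.
move=> hD [hrho _] ht; have hg := good_of_ok ht.
apply: sumr_ge0 => n _; apply: mulr_ge0.
  have [h0 _] := hg ord_max ord_max (leqnn _).
  by apply: cp_diag => //; apply: (dyn_cp hD) => //; rewrite lexx.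
apply: prodr_ge0 => l _.
have [ha hb] := hg (widen_ord (leqnSn k) l) (lift ord0 l) (leqnSn _).
apply: cp_diag; last exact: psd_delta.
exact: (dyn_cp hD).
Qed.

Lemma forall_upd (C : numClosedFieldType) k (xi : 'I_k -> C) l a b :
  [forall j, upd xi l a j == upd xi l b j] = (a == b).
Proof.
apply/forallP/eqP => [h|->] //; by move: (h l); rewrite /upd eqxx => /eqP.
Qed.

Lemma forall_const1 (C : numClosedFieldType) (a b : C) :
  [forall l : 'I_1, a == b] = (a == b).
Proof. by apply/forallP/idP => [/(_ ord0)|h l]. Qed.
Unset Implicit Arguments.

Theorem mainTheorem5 (C : numClosedFieldType) (R : realFieldType) (d : nat)
    (Lam : R -> R -> 'M[C]_d -> 'M[C]_d) (v : 'I_d -> C) (rho : 'M[C]_d) :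
  dyn_family Lam -> density rho ->
  (* (i) Chapman-Kolmogorov consistency of tilde q *)
  ((forall t : 'I_1 -> R, times_ok t ->
      \sum_(a <- Omega v) \sum_(b <- Omega v)
         qtilde Lam v rho (fun _ => a) (fun _ => b) t = 1) /\
   (forall (k : nat) (xi eta : 'I_k.+2 -> C) (t : 'I_k.+2 -> R) (l : 'I_k.+2),
      times_ok t ->
      \sum_(a <- Omega v) \sum_(b <- Omega v)
         qtilde Lam v rho (upd xi l a) (upd eta l b) t
      = qtilde Lam v rho (fun j => xi (lift l j)) (fun j => eta (lift l j))
                         (fun j => t (lift l j)))) /\
  (* (ii) *)
  (dephasing Lam ->
   (forall (k : nat) (xi eta : 'I_k.+1 -> C) (t : 'I_k.+1 -> R), times_ok t ->
      qtilde Lam v rho xi eta t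
      = ([forall l, xi l == eta l])%:R * ptilde Lam v rho xi t) /\
   (forall (k : nat) (xi : 'I_k.+1 -> C) (t : 'I_k.+1 -> R), times_ok t ->
      0 <= ptilde Lam v rho xi t) /\
   (forall t : 'I_1 -> R, times_ok t ->
      \sum_(a <- Omega v) ptilde Lam v rho (fun _ => a) t = 1) /\
   (forall (k : nat) (xi : 'I_k.+2 -> C) (t : 'I_k.+2 -> R) (l : 'I_k.+2),
      times_ok t ->
      \sum_(a <- Omega v) ptilde Lam v rho (upd xi l a) t
      = ptilde Lam v rho (fun j => xi (lift l j)) (fun j => t (lift l j)))).
Proof.
move=> hD hrho.
have I1 := partI1 v hD hrho.
have I2 := partI2 v rho hD.
split; first by split.
move=> hdep; split; last split; last split.
- move=> k xi eta t ht; exact: qdiag.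
- move=> k xi t ht; exact: ptilde_ge0.
- move=> t ht; apply: etrans _ (I1 t ht).
  apply: eq_big_seq => a ha.
  rewrite (eq_bigr (fun b => (a == b)%:R * ptilde Lam v rho (fun _ => a) t)).
    by rewrite sum_pick // undup_uniq.
  by move=> b _; rewrite qdiag // forall_const1.
- move=> k xi t l ht; apply: etrans _ (etrans (I2 k xi xi t l ht) _).
    apply: eq_big_seq => a ha.
    rewrite (eq_bigr (fun b => (a == b)%:R * ptilde Lam v rho (upd xi l a) t)).
      by rewrite sum_pick // undup_uniq.
    by move=> b _; rewrite qdiag // forall_upd.
  rewrite qdiag //; last exact: ok_lift.
  have -> : [forall j, xi (lift l j) == xi (lift l j)] by apply/forallP => j.
  by rewrite mul1r.
Qed.
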